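(* For any $z\ge1$, $$\mathcal{E}^{\mathrm{TW}}_{m,1}\le 2z^{-\nu}\,\mathcal{K}(z),\qquad \nu=\lceil n/2\rceil.$$
   Context: $m$-twist system with parameter $\rho\in(0,1/2]$ on $n$ agents: at each time $t$ the agents are relabeled so that their positions satisfy $x_1\le\dots\le x_n$. A partition of $[n]$ into at most $m$ intervals of consecutive indices $[u_{t,l},v_{t,l}]$ (blocks) is given. The next sorted positions $y_1\le\dots\le y_n$ satisfy, for every block $[u,v]$ and $i\in[u,v]$, $$(1-\rho)x_u+\rho x_{\min\{i+1,v\}}\le y_i\le\rho x_{\max\{i-1,u\}}+(1-\rho)x_v.$$ Definitions: - The $1$-energy is $\sum_t\sum_l(x_{v_{t,l}}(t)-x_{u_{t,l}}(t))$. - $\mathcal{E}^{\mathrm{TW}}_{m,1}$ is its supremum over all $m$-twist systems with initial positions in $[0,1]$. - For $k\in[n]$, let $v(k)$ (resp. $u(k)$) be the right (resp. left) endpoint of the block containing $k$ at time $t$. - $K_t(z)=\sum_{k=1}^n(x_{v(k)}(t)-x_k(t))z^k$, and $K(z)=\sum_{t\ge0}K_t(z)$. - $\mathcal{K}(z)$ is the supremum of $K(z)$ over all $m$-twist systems with initial positions in $[0,1]$. *)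

(* Defs.v *)
From HB Require Import structures.
From mathcomp Require Import all_boot all_order all_algebra.
From mathcomp Require Import all_classical all_reals all_analysis.
Set Implicit Arguments. Unset Strict Implicit. Unset Printing Implicit Defensive.
Import Order.TTheory GRing.Theory Num.Theory.
Local Open Scope ring_scope.

(* Agents are indexed 0..n-1 (agent k of the paper is index k-1). *)
Definition interval_partition (n : nat) (s : seq (nat * nat)) : bool :=
  all (fun b => b.1 <= b.2)%N s &&
  (flatten [seq iota b.1 (b.2.+1 - b.1) | b <- s] == iota 0 n).

Definition blk (s : seq (nat * nat)) (k : nat) : nat * nat :=
  nth (0%N, 0%N) s (find (fun b => (b.1 <= k <= b.2)%N) s).
Definition ublk (s : seq (nat * nat)) (k : nat) : nat := (blk s k).1.
Definition vblk (s : seq (nat * nat)) (k : nat) : nat := (blk s k).2.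

(* An m-twist system with parameter rho on n agents:
   pos t i = i-th smallest position at time t (sorted positions),
   part t  = the block partition at time t (at most m blocks). *)
Record twist_system (R : realType) (n m : nat) (rho : R) := TwistSystem {
  pos : nat -> nat -> R;
  part : nat -> seq (nat * nat);
  pos_sorted : forall t i, (i.+1 < n)%N -> pos t i <= pos t i.+1;
  part_ok : forall t, interval_partition n (part t);
  part_size : forall t, (size (part t) <= m)%N;
  pos_step : forall t b i, b \in part t -> (b.1 <= i <= b.2)%N ->
    (1 - rho) * pos t b.1 + rho * pos t (minn i.+1 b.2) <= pos t.+1 i /\
    pos t.+1 i <= rho * pos t (maxn i.-1 b.1) + (1 - rho) * pos t b.2
}.

Definition init01 (R : realType) (n m : nat) (rho : R)
  (S : twist_system n m rho) : Prop :=
  forall i, (i < n)%N -> 0 <= pos S 0 i <= 1.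

Definition energy1 (R : realType) (n m : nat) (rho : R)
  (S : twist_system n m rho) : \bar R :=
  (\sum_(0 <= t <oo) (\sum_(b <- part S t) (pos S t b.2 - pos S t b.1))%:E)%E.

(* K_t(z) = sum_{k=1}^n (x_{v(k)}(t) - x_k(t)) z^k, with 0-based index i = k-1 *)
Definition Kt (R : realType) (n m : nat) (rho : R)
  (S : twist_system n m rho) (t : nat) (z : R) : R :=
  \sum_(i < n) (pos S t (vblk (part S t) i) - pos S t i) * z ^+ i.+1.

Definition Kser (R : realType) (n m : nat) (rho : R)
  (S : twist_system n m rho) (z : R) : \bar R :=
  (\sum_(0 <= t <oo) (Kt S t z)%:E)%E.

Definition ETW (R : realType) (n m : nat) (rho : R) : \bar R :=
  ereal_sup [set e | exists S : twist_system n m rho, init01 S /\ e = energy1 S].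

Definition Ksup (R : realType) (n m : nat) (rho : R) (z : R) : \bar R :=
  ereal_sup [set e | exists S : twist_system n m rho, init01 S /\ e = Kser S z].

(* Main.v *)
Set Warnings "-all".
Require Import Defs.
From HB Require Import structures.
From mathcomp Require Import all_boot all_order all_algebra.
From mathcomp Require Import all_classical all_reals all_analysis.
From mathcomp Require Import zify ring lra.
Import Order.TTheory GRing.Theory Num.Theory.
Local Open Scope ring_scope.
Set Implicit Arguments. Unset Strict Implicit.

Definition blocks (s : seq (nat * nat)) :=
  flatten [seq iota b.1 (b.2.+1 - b.1) | b <- s].

Lemma blocks_mem s b i : b \in s -> (b.1 <= i <= b.2)%N -> i \in blocks s.
Proof.
move=> bs hi; apply/flattenP; exists (iota b.1 (b.2.+1 - b.1)).
  by apply/mapP; exists b.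
rewrite mem_iota; lia.
Qed.

Lemma blk_gen s a N : all (fun b => b.1 <= b.2)%N s -> blocks s = iota a N ->
  forall b i, b \in s -> (b.1 <= i <= b.2)%N -> blk s i = b.
Proof.
elim: s a N => [//|c s IH] a N /= /andP[hc hall] hbl b i.
rewrite /blocks /= in hbl.
set L := (c.2.+1 - c.1)%N in hbl.
have hsz : (L <= N)%N.
  by have := congr1 size hbl; rewrite size_cat !size_iota => <-; rewrite leq_addr.
have hN : N = (L + (N - L))%N by lia.
move: hbl; rewrite hN iotaD => /eqP; rewrite eqseq_cat ?size_iota //.
case/andP=> /eqP h1 /eqP h2.
have ca : c.1 = a.
  have : (c.1 \in iota a L) by rewrite -h1 mem_iota; lia.
  have : (a \in iota c.1 L) by rewrite h1 mem_iota; lia.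
  rewrite !mem_iota; lia.
rewrite in_cons => /orP[/eqP -> hi | bs hi].
  by rewrite /blk /= hi.
have hb1 : (a + L <= b.1)%N.
  have : b.1 \in iota (a + L) (N - L).
    rewrite -h2; apply: (@blocks_mem _ b b.1 bs); move: hall => /allP /(_ b bs); lia.
  by rewrite mem_iota => /andP[].
have := IH _ _ hall h2 b i bs hi.
rewrite /blk /=.
have -> : ((c.1 <= i) && (i <= c.2))%N = false by lia.
by [].
Qed.

Lemma rev_iota_g n a L : (a + L <= n)%N ->
  rev (map (fun k => n.-1 - k)%N (iota a L)) = iota (n - (a + L)) L.
Proof.
elim: L a => [//|L IH] a h.
have E : iota (n - (a + L.+1)) L.+1 = rcons (iota (n - (a+L.+1)) L) (n - (a+L.+1) + L)%N.
  by rewrite -addn1 iotaD -cats1.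
rewrite E /= rev_cons IH; last lia.
congr rcons; [congr iota; lia | lia].
Qed.

Definition rpart n (s : seq (nat * nat)) :=
  rev [seq ((n.-1 - b.2)%N, (n.-1 - b.1)%N) | b <- s].

Lemma part_bnd n s b : interval_partition n s -> b \in s ->
  (b.1 <= b.2 < n)%N.
Proof.
case: b => u v; case/andP=> /allP ha /eqP hb bs.
have /= h := ha _ bs.
have : v \in iota 0 n.
  rewrite -hb; apply: (@blocks_mem _ (u, v) v bs) => /=. lia.
rewrite mem_iota /=; lia.
Qed.

Lemma rpart_ok n s : interval_partition n s -> interval_partition n (rpart n s).
Proof.
move=> hp; have hp' := hp; case/andP: hp' => /allP ha /eqP hb.
apply/andP; split.
  apply/allP => b'; rewrite /rpart mem_rev => /mapP [b bs ->] /=; have /= := ha b bs; lia.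
apply/eqP.
rewrite /rpart map_rev -map_comp.
have -> : [seq ((fun b : nat * nat => iota b.1 (b.2.+1 - b.1))
              \o (fun b : nat * nat => ((n.-1 - b.2)%N, (n.-1 - b.1)%N))) i | i <- s]
  = [seq rev ((map (fun k => n.-1 - k)%N) (iota b.1 (b.2.+1 - b.1))) | b <- s].
  apply/eq_in_map => -[u v] bs /=.
  have /= hbb := part_bnd hp bs.
  rewrite rev_iota_g; last lia.
  congr iota; lia.
rewrite (map_comp rev) -rev_flatten.
have -> : [seq (n.-1 - k)%N | x <- s, k <- iota x.1 (x.2.+1 - x.1)] =
   map (fun k => n.-1 - k)%N (iota 0 n) by rewrite -hb map_flatten -map_comp.
rewrite rev_iota_g //; congr iota; lia.
Qed.

Lemma blk_spec n s i : interval_partition n s -> (i < n)%N ->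
  blk s i \in s /\ ((blk s i).1 <= i <= (blk s i).2)%N /\ ((blk s i).2 < n)%N.
Proof.
move=> hp hi; have hp' := hp; case/andP: hp' => ha /eqP hb.
have : i \in blocks s by rewrite /blocks hb mem_iota.
case/flattenP => l /mapP [[u v] bs ->]; rewrite mem_iota /= => hib.
have -> : blk s i = (u, v) by apply: (blk_gen ha hb) => //=; lia.
have /= := part_bnd hp bs; split => //=; lia.
Qed.

Lemma blk_eq n s b i : interval_partition n s -> b \in s -> (b.1 <= i <= b.2)%N ->
  blk s i = b.
Proof. move=> hp bs hi; case/andP: hp => ha /eqP hb; exact: (blk_gen ha hb bs hi). Qed.

Lemma vblk_rpart n s i : interval_partition n s -> (i < n)%N ->
  vblk (rpart n s) i = (n.-1 - ublk s (n.-1 - i))%N.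
Proof.
move=> hp hi.
have hj0 : (n.-1 - i < n)%N by lia.
have [hbs [hj hbn]] := blk_spec hp hj0.
set b := blk s (n.-1 - i) in hbs hj hbn *.
have hb' : ((n.-1 - b.2)%N, (n.-1 - b.1)%N) \in rpart n s.
  by rewrite /rpart mem_rev; apply: map_f.
rewrite /vblk (blk_eq (rpart_ok hp) hb') /=; first by [].
lia.
Qed.

Section Mirror.
Variables (R : realType) (n m : nat) (rho : R) (S : twist_system n m rho).

Definition mpos t i := 1 - pos S t (n.-1 - i)%N.
Definition mpart t := rpart n (part S t).

Lemma mpos_sorted t i : (i.+1 < n)%N -> mpos t i <= mpos t i.+1.
Proof.
move=> hi; rewrite /mpos lerD2l lerN2.
have h : ((n.-1 - i.+1).+1 < n)%N by lia.
have := pos_sorted S t h.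
by have -> : (n.-1 - i.+1).+1 = (n.-1 - i)%N by lia.
Qed.

Lemma mpart_ok t : interval_partition n (mpart t).
Proof. exact: rpart_ok (part_ok S t). Qed.

Lemma mpart_size t : (size (mpart t) <= m)%N.
Proof. by rewrite /mpart /rpart size_rev size_map part_size. Qed.

Lemma mpos_step t b i : b \in mpart t -> (b.1 <= i <= b.2)%N ->
    (1 - rho) * mpos t b.1 + rho * mpos t (minn i.+1 b.2) <= mpos t.+1 i /\
    mpos t.+1 i <= rho * mpos t (maxn i.-1 b.1) + (1 - rho) * mpos t b.2.
Proof.
rewrite /mpart /rpart mem_rev => /mapP [[u v] bs ->] /=.
have /= hb := part_bnd (part_ok S t) bs.
move=> hi.
set j := (n.-1 - i)%N.
have hj : (u <= j <= v)%N by lia.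
have [h1 h2] := pos_step bs hj.
rewrite /mpos.
have -> : (n.-1 - (n.-1 - v))%N = v by lia.
have -> : (n.-1 - (n.-1 - u))%N = u by lia.
have -> : (n.-1 - minn i.+1 (n.-1 - u))%N = maxn j.-1 u by lia.
have -> : (n.-1 - maxn i.-1 (n.-1 - v))%N = minn j.+1 v by lia.
rewrite -/j /=; split; lra.
Qed.

Definition mirror : twist_system n m rho :=
  TwistSystem mpos_sorted mpart_ok mpart_size mpos_step.

End Mirror.

Section Ineq.
Variables (R : realType) (n m : nat) (rho : R) (S : twist_system n m rho).

Lemma pos_mono t i j : (i <= j)%N -> (j < n)%N -> pos S t i <= pos S t j.
Proof.
move=> hij; elim: j hij => [|j IH] hij hj.
  by have -> : i = 0%N by lia.
have [h|h] := leqP i j.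
  apply: le_trans (IH h _) (pos_sorted S t hj); lia.
by have -> : i = j.+1 by lia.
Qed.

Lemma Kt_ge0 t z : 0 <= z -> 0 <= Kt S t z.
Proof.
move=> hz; apply: sumr_ge0 => i _; apply: mulr_ge0; last exact: exprn_ge0.
have [_ [hi hv]] := blk_spec (part_ok S t) (ltn_ord i).
rewrite subr_ge0; apply: pos_mono => //; rewrite /vblk; lia.
Qed.

Lemma Kt_mirror t z : Kt (mirror S) t z =
  \sum_(i < n) (pos S t i - pos S t (ublk (part S t) i)) * z ^+ (n - i).
Proof.
rewrite /Kt /= (reindex_inj rev_ord_inj) /=.
apply: eq_bigr => i _.
have hi := ltn_ord i.
rewrite /mpos /mpart vblk_rpart ?(part_ok S t) //; last lia.
have -> : (n.-1 - (n - i.+1))%N = i by lia.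
have [_ [hu _]] := blk_spec (part_ok S t) hi.
have -> : (n.-1 - (n.-1 - ublk (part S t) i))%N = ublk (part S t) i by rewrite /ublk; lia.
have -> : ((n - i.+1).+1 = n - i)%N by lia.
congr (_ * _); lra.
Qed.
End Ineq.

Lemma sum_ge_term (R : realType) (l : seq nat) (F : nat -> R) r : uniq l -> r \in l ->
  (forall k, k \in l -> 0 <= F k) -> F r <= \sum_(k <- l) F k.
Proof.
move=> ul rl h; rewrite (bigD1_seq r) //= lerDl big_seq_cond sumr_ge0 // => k /andP[kl _].
exact: h.
Qed.

Section Key.
Variables (R : realType) (n m : nat) (rho : R) (S : twist_system n m rho).

Lemma key t z : 1 <= z ->
  (\sum_(b <- part S t) (pos S t b.2 - pos S t b.1)) * z ^+ uphalf n
   <= Kt S t z + Kt (mirror S) t z.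
Proof.
move=> z1; have z0 : 0 <= z by lra.
rewrite Kt_mirror /Kt -big_split /=.
set s := part S t. set x := pos S t.
pose g := fun i : nat => (x (vblk s i) - x i) * z ^+ i.+1 + (x i - x (ublk s i)) * z ^+ (n - i).
rewrite (_ : \sum_(i < n) _ = \sum_(i <- iota 0 n) g i); last first.
  by rewrite -(big_mkord xpredT g) /index_iota subn0.
have hp := part_ok S t; have hp' := hp; case/andP: hp' => ha /eqP hb.
rewrite -hb big_flatten big_map /= mulr_suml.
rewrite big_seq_cond [leRHS]big_seq_cond; apply: ler_sum => -[u v] /andP[bs _] /=.
have /= huv := part_bnd hp bs.
have hblk : forall k, (u <= k <= v)%N -> blk s k = (u, v).
  by move=> k hk; apply: (blk_eq hp bs).
have hg : forall k, (u <= k <= v)%N ->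
   g k = (x v - x k) * z ^+ k.+1 + (x k - x u) * z ^+ (n - k).
  by move=> k hk; rewrite /g /vblk /ublk hblk.
have hmain : forall r, (u <= r <= v)%N -> (r = v \/ (uphalf n <= r.+1)%N) ->
   (r = u \/ (uphalf n <= n - r)%N) -> (x v - x u) * z ^+ uphalf n <= g r.
  move=> r hr c1 c2; rewrite hg //.
  have e1 : (x v - x r) * z ^+ uphalf n <= (x v - x r) * z ^+ r.+1.
    case: c1 => [->|c1]; first by rewrite !subrr !mul0r.
    apply: ler_wpM2l; first by rewrite subr_ge0; apply: pos_mono => //; lia.
    exact: ler_weXn2l.
  have e2 : (x r - x u) * z ^+ uphalf n <= (x r - x u) * z ^+ (n - r).
    case: c2 => [->|c2]; first by rewrite !subrr !mul0r.
    apply: ler_wpM2l; first by rewrite subr_ge0; apply: pos_mono => //; lia.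
    exact: ler_weXn2l.
  have -> : (x v - x u) * z ^+ uphalf n =
     (x v - x r) * z ^+ uphalf n + (x r - x u) * z ^+ uphalf n by ring.
  exact: lerD.
have hsum : forall r, (u <= r <= v)%N -> g r <= \sum_(k <- iota u (v.+1 - u)) g k.
  move=> r hr; apply: sum_ge_term; first exact: iota_uniq.
    rewrite mem_iota; lia.
  move=> k; rewrite mem_iota => hk; rewrite hg; last lia.
  apply: addr_ge0; apply: mulr_ge0; try exact: exprn_ge0;
    rewrite subr_ge0; apply: pos_mono; lia.
have [h1|h1] := leqP (uphalf n) u.+1.
  apply: le_trans (hsum u _); last lia.
  apply: hmain; [lia|right; lia|by left].
have [h2|h2] := leqP (uphalf n) (n - v).
  apply: le_trans (hsum v _); last lia.
  apply: hmain; [lia|by left|by right].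
apply: le_trans (hsum (uphalf n).-1 _); last lia.
apply: hmain; [lia|right; lia|right; lia].
Qed.
End Key.

Lemma init01_mirror (R : realType) (n m : nat) (rho : R) (S : twist_system n m rho) :
  init01 S -> init01 (mirror S).
Proof.
move=> h i hi /=; rewrite /mpos.
have hj : (n.-1 - i < n)%N by lia.
have /andP[a b] := h _ hj.
apply/andP; split; lra.
Qed.

Lemma Kser_ge0 (R : realType) (n m : nat) (rho : R) (S : twist_system n m rho) z :
  1 <= z -> (0 <= Kser S z)%E.
Proof.
move=> z1; apply: nneseries_ge0 => t _ _; rewrite lee_fin; apply: Kt_ge0; lra.
Qed.

Lemma energy_le (R : realType) (n m : nat) (rho : R) (S : twist_system n m rho) z :
  1 <= z ->
  (energy1 S <= (z ^- uphalf n)%:E * (Kser S z + Kser (mirror S) z))%E.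
Proof.
move=> z1; have z0 : 0 < z by lra.
have zn : 0 < z ^+ uphalf n by apply: exprn_gt0.
set c := z ^- uphalf n.
have c0 : 0 <= c by rewrite /c invr_ge0 ltW.
rewrite /energy1 /Kser -nneseriesD; last first.
- by move=> i _ _; rewrite lee_fin; apply: Kt_ge0; lra.
- by move=> i _ _; rewrite lee_fin; apply: Kt_ge0; lra.
rewrite -nneseriesZl; last first.
  by move=> i _; apply: adde_ge0; rewrite lee_fin; apply: Kt_ge0; lra.
apply: lee_nneseries.
  move=> t _ _; rewrite lee_fin big_seq; apply: sumr_ge0 => -[u v] bs /=.
  have /= h := part_bnd (part_ok S t) bs.
  rewrite subr_ge0; apply: pos_mono; lia.
move=> t _; rewrite -EFinD -EFinM lee_fin.
have := key S t z1.
set E := \sum_(b <- _) _; set K := (_ + _).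
move=> h.
have -> : E = E * z ^+ uphalf n * c by rewrite /c -mulrA mulfV ?mulr1 // gt_eqF.
by rewrite mulrC; apply: ler_wpM2l.
Qed.

Unset Implicit Arguments.
Theorem lemma3 (R : realType) (n m : nat) (rho z : R) :
  0 < rho -> rho <= 1 / 2 -> 1 <= z ->
  (ETW n m rho <= (2 * z ^- (uphalf n))%:E * Ksup n m rho z)%E.
Proof.
move=> _ _ z1; have z0 : 0 < z by lra.
have c0 : 0 <= z ^- uphalf n by rewrite invr_ge0 ltW // exprn_gt0.
apply: ge_ereal_sup => _ [S [hS ->]].
apply: le_trans (energy_le S z1) _.
have hK1 : (Kser S z <= Ksup n m rho z)%E.
  by apply: ereal_sup_ubound; exists S.
have hK2 : (Kser (mirror S) z <= Ksup n m rho z)%E.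
  by apply: ereal_sup_ubound; exists (mirror S); split => //; apply: init01_mirror.
have hK0 : (0 <= Ksup n m rho z)%E by apply: le_trans hK1; apply: Kser_ge0.
apply: le_trans (lee_wpmul2l _ (leeD hK1 hK2)) _; first by rewrite lee_fin.
rewrite ge0_muleDr // -ge0_muleDl ?lee_fin // -EFinD.
by rewrite (_ : z ^- uphalf n + z ^- uphalf n = 2 * z ^- uphalf n) //; ring.
Qed.
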